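(* Let $X$ be a topological space and $g,h:X\to\overline{\mathbb R}$. Then the following are equivalent: (i) $(g,h)$ is a stable pair of Hahn; (ii) $(g,h)$ is a countable pair of Hahn and $g$ and $h$ are functions of the first stable Baire class. Moreover, if $X$ is normal, then (i) and (ii) are also equivalent to each of: (iii) $(g,h)$ is a pair of Hahn and $g$ and $h$ are functions of the first stable Baire class; (iv) $(g,h)$ is a pair of Hahn and $g$ and $h$ are $\sigma$-continuous.
   Context: $\overline{\mathbb R}=[-\infty,+\infty]$ with the order topology. A pair $(g,h)$ is a pair of Hahn if $g\le h$, $g$ is upper semicontinuous and $h$ is lower semicontinuous. It is a countable pair of Hahn if there are continuous $g_n,h_n:X\to\overline{\mathbb R}$ with $g(x)=\inf_n g_n(x)\le\sup_n h_n(x)=h(x)$ for all $x$. It is a stable pair of Hahn if there are continuous $u_n:X\to\overline{\mathbb R}$ with $g(x)=\min_{n\in\mathbb N}u_n(x)$ and $h(x)=\max_{n\in\mathbb N}u_n(x)$ for all $x\in X$ (attained). A sequence $f_n:X\to Z$ converges stably to $f$ if for every $x\in X$ there is $n$ with $f_k(x)=f(x)$ for all $k\ge n$; $f$ is of the first stable Baire class if it is the stable limit of a sequence of continuous functions $X\to\overline{\mathbb R}$. A function $f:X\to\overline{\mathbb R}$ is $\sigma$-continuous if there is a sequence of closed sets $X_n\subseteq X$ with $X=\bigcup_n X_n$ and $f|_{X_n}$ continuous for each $n$. *)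

(* Defs.v *)
From HB Require Import structures.
From mathcomp Require Import all_boot all_order all_algebra.
From mathcomp Require Import all_classical all_reals all_analysis.
Set Implicit Arguments. Unset Strict Implicit. Unset Printing Implicit Defensive.
Import Order.TTheory GRing.Theory Num.Theory.
Local Open Scope classical_set_scope.
Local Open Scope ring_scope.
Local Open Scope ereal_scope.

Section HahnDefs.
Context {X : topologicalType} {R : realType}.
Implicit Types f g h : X -> \bar R.

Definition upper_semicontinuous f := forall x (a : R), f x < a%:E ->
  exists2 V, nbhs x V & forall y, V y -> f y < a%:E.

Definition hahn_pair g h :=
  (forall x, g x <= h x) /\ upper_semicontinuous g /\ lower_semicontinuous h.

Definition countable_hahn_pair g h :=
  exists (gn hn : nat -> X -> \bar R),
    (forall n, continuous (gn n)) /\ (forall n, continuous (hn n)) /\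
    forall x, g x = ereal_inf (range (fun n => gn n x)) /\
              g x <= h x /\
              h x = ereal_sup (range (fun n => hn n x)).

Definition stable_hahn_pair g h :=
  exists u : nat -> X -> \bar R,
    (forall n, continuous (u n)) /\
    forall x, ((exists n, u n x = g x) /\ (forall n, g x <= u n x)) /\
              ((exists n, u n x = h x) /\ (forall n, u n x <= h x)).

Definition stably_converges (fn : nat -> X -> \bar R) f :=
  forall x, exists n, forall k, (n <= k)%N -> fn k x = f x.

Definition first_stable_baire f :=
  exists fn : nat -> X -> \bar R,
    (forall n, continuous (fn n)) /\ stably_converges fn f.

Definition sigma_continuous f :=
  exists Xn : nat -> set X,
    (forall n, closed (Xn n)) /\ \bigcup_n Xn n = setT /\
    (forall n, {within Xn n, continuous f}).

End HahnDefs.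

(* Main.v *)
Require Import Defs.
From HB Require Import structures.
From mathcomp Require Import all_boot all_order all_algebra.
From mathcomp Require Import all_classical all_reals all_analysis.
From mathcomp Require Import lra.
Set Implicit Arguments. Unset Strict Implicit. Unset Printing Implicit Defensive.
Import Order.TTheory GRing.Theory Num.Theory.
Import numFieldNormedType.Exports.
Local Open Scope classical_set_scope.
Local Open Scope ring_scope.


Section basics.
Context {R : realType} {X : topologicalType}.
Local Open Scope ereal_scope.
Implicit Types (f g h : X -> \bar R).

Lemma cont_min f g : continuous f -> continuous g ->
  continuous (fun x => mine (f x) (g x)).
Proof.
move=> cf cg x.
apply: (@continuous_comp _ _ _ (fun x => (f x, g x)) (fun xy : \bar R * \bar R => mine xy.1 xy.2)).
  exact: (cvg_pair (cf x) (cg x)).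
exact: min_continuous.
Qed.

Lemma cont_max f g : continuous f -> continuous g ->
  continuous (fun x => maxe (f x) (g x)).
Proof.
move=> cf cg x.
apply: (@continuous_comp _ _ _ (fun x => (f x, g x)) (fun xy : \bar R * \bar R => maxe xy.1 xy.2)).
  exact: (cvg_pair (cf x) (cg x)).
exact: max_continuous.
Qed.

Lemma cont_lt_nbhs f x (a : \bar R) : continuous f -> f x < a ->
  nbhs x [set y | f y < a].
Proof.
move=> cf fxa; apply: (cf x [set y | y < a]).
by apply: open_nbhs_nbhs; split => //; exact: open_ereal_lt_ereal.
Qed.

Lemma cont_gt_nbhs f x (a : \bar R) : continuous f -> a < f x ->
  nbhs x [set y | a < f y].
Proof.
move=> cf fxa; apply: (cf x [set y | a < y]).
by apply: open_nbhs_nbhs; split => //; exact: open_ereal_gt_ereal.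
Qed.

Lemma closed_eqf f g : continuous f -> continuous g -> closed [set x | f x = g x].
Proof.
move=> cf cg x clx; apply: ereal_hausdorff => A B nA nB.
have := clx (f @^-1` A `&` g @^-1` B); case.
  by apply: filterI; [exact: cf|exact: cg].
move=> y [/= fgy [Ay By]]; exists (f y); split => //; by rewrite fgy.
Qed.


Lemma stable_countable g h : stable_hahn_pair g h -> countable_hahn_pair g h.
Proof.
case=> u [cu P]; exists u, u; split=> //; split=> // x.
have [[[n gn] gl] [[m hm] hl]] := P x.
split; last split.
- apply/eqP; rewrite eq_le; apply/andP; split.
    by apply: le_ereal_inf_tmp => _ [k _ <-]; exact: gl.
  by rewrite -gn; apply: ereal_inf_lbound; exists n.
- by rewrite -gn; exact: hl.
- apply/eqP; rewrite eq_le; apply/andP; split.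
    by rewrite -hm; apply: ereal_sup_ubound; exists m.
  by apply: ge_ereal_sup => _ [k _ <-]; exact: hl.
Qed.

Lemma stable_hahn g h : stable_hahn_pair g h -> hahn_pair g h.
Proof.
case=> u [cu P]; split; last split.
- by move=> x; have [[[n <-] _] [_ hl]] := P x; exact: hl.
- move=> x a gxa; have [[[n gn] gl] _] := P x.
  exists [set y | u n y < a%:E]; first by apply: cont_lt_nbhs => //; rewrite gn.
  by move=> y /= uy; have [[_ gl'] _] := P y; exact: le_lt_trans (gl' n) uy.
- move=> x a gxa; have [_ [[n gn] gl]] := P x.
  exists [set y | a%:E < u n y]; first by apply: cont_gt_nbhs => //; rewrite gn.
  by move=> y /= uy; have [_ [_ gl']] := P y; exact: lt_le_trans uy (gl' n).
Qed.

Lemma countable_hahn g h : countable_hahn_pair g h -> hahn_pair g h.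
Proof.
case=> gn [hn [cg [ch P]]]; split; last split.
- by move=> x; have [_ []] := P x.
- move=> x a; have [-> _] := P x; case/ereal_inf_lt => _ [n _ <-] gna.
  exists [set y | gn n y < a%:E]; first exact: cont_lt_nbhs.
  move=> y /= gy; have [-> _] := P y; apply: le_lt_trans gy.
  by apply: ereal_inf_lbound; exists n.
- move=> x a; have [_ [_ ->]] := P x; case/ereal_sup_gt => _ [n _ <-] gna.
  exists [set y | a%:E < hn n y]; first exact: cont_gt_nbhs.
  move=> y /= gy; have [_ [_ ->]] := P y; apply: lt_le_trans gy _.
  by apply: ereal_sup_ubound; exists n.
Qed.

Fixpoint minu (u : nat -> X -> \bar R) n x :=
  if n is n'.+1 then mine (minu u n' x) (u n x) else u 0%N x.
Fixpoint maxu (u : nat -> X -> \bar R) n x :=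
  if n is n'.+1 then maxe (maxu u n' x) (u n x) else u 0%N x.

Lemma minu_cont u n : (forall k, continuous (u k)) -> continuous (minu u n).
Proof. by move=> cu; elim: n => [|n IH] //=; exact: cont_min. Qed.
Lemma maxu_cont u n : (forall k, continuous (u k)) -> continuous (maxu u n).
Proof. by move=> cu; elim: n => [|n IH] //=; exact: cont_max. Qed.

Lemma minu_le u n k x : (k <= n)%N -> minu u n x <= u k x.
Proof.
elim: n => [|n IH]; first by rewrite leqn0 => /eqP ->.
rewrite leq_eqVlt => /orP[/eqP ->|]; first by rewrite /= ge_min lexx orbT.
by rewrite ltnS => /IH kn /=; rewrite ge_min kn.
Qed.
Lemma minu_ge u n x a : (forall k, a <= u k x) -> a <= minu u n x.
Proof. by move=> H; elim: n => [|n IH] //=; rewrite le_min IH H. Qed.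
Lemma maxu_ge u n k x : (k <= n)%N -> u k x <= maxu u n x.
Proof.
elim: n => [|n IH]; first by rewrite leqn0 => /eqP ->.
rewrite leq_eqVlt => /orP[/eqP ->|]; first by rewrite /= le_max lexx orbT.
by rewrite ltnS => /IH kn /=; rewrite le_max kn.
Qed.
Lemma maxu_le u n x a : (forall k, u k x <= a) -> maxu u n x <= a.
Proof. by move=> H; elim: n => [|n IH] //=; rewrite ge_max IH H. Qed.

Lemma stable_baire g h : stable_hahn_pair g h ->
  first_stable_baire g /\ first_stable_baire h.
Proof.
case=> u [cu P]; split.
- exists (minu u); split; first by move=> n; exact: minu_cont.
  move=> x; have [[[n gn] gl] _] := P x; exists n => k nk.
  apply/eqP; rewrite eq_le; apply/andP; split.
    by rewrite -gn; exact: minu_le.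
  exact: minu_ge.
- exists (maxu u); split; first by move=> n; exact: maxu_cont.
  move=> x; have [_ [[n gn] gl]] := P x; exists n => k nk.
  apply/eqP; rewrite eq_le; apply/andP; split.
    exact: maxu_le.
  by rewrite -gn; exact: maxu_ge.
Qed.

Lemma baire_sigma f : first_stable_baire f -> sigma_continuous f.
Proof.
case=> fn [cf P].
pose Xn n := [set x | forall k, (n <= k)%N -> fn k x = fn n x].
have XnE n : Xn n = \bigcap_(k in [set k | (n <= k)%N]) [set x | fn k x = fn n x].
  by apply/seteqP; split => x /= H k; [exact: H|exact: H].
exists Xn; split; last split.
- move=> n; rewrite XnE; apply: closed_bigI => k _; exact: closed_eqf.
- apply/seteqP; split => // x _; have [n Hn] := P x; exists n => //.
  by move=> k nk /=; rewrite Hn // Hn.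
- move=> n; apply: (@subspace_eq_continuous _ _ _ (fn n)); last first.
    exact: continuous_subspaceT.
  move=> x; rewrite inE => Xx; have [m Hm] := P x.
  by rewrite -(Xx (maxn n m)) ?leq_maxl // Hm // leq_maxr.
Qed.
End basics.


Section kt.
Context {R : realType} {X : topologicalType}.
Implicit Types (f g h : X -> R).

Definition rusc f := forall x a, f x < a ->
  exists2 V, nbhs x V & forall y, V y -> f y < a.
Definition rlsc f := forall x a, a < f x ->
  exists2 V, nbhs x V & forall y, V y -> a < f y.

Lemma rusc_closed f c : rusc f -> closed [set x | c <= f x].
Proof.
move=> uf; have -> : [set x | c <= f x] = ~` [set x | f x < c].
  by apply/seteqP; split => x /=; rewrite leNgt => /negP.
apply: open_closedC; rewrite openE => x /= /uf [V nV VP].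
by apply: filterS nV.
Qed.

Lemma rlsc_closed f c : rlsc f -> closed [set x | f x <= c].
Proof.
move=> uf; have -> : [set x | f x <= c] = ~` [set x | c < f x].
  by apply/seteqP; split => x /=; rewrite leNgt => /negP.
apply: open_closedC; rewrite openE => x /= /uf [V nV VP].
by apply: filterS nV.
Qed.

Arguments rusc_closed : clear implicits.
Arguments rlsc_closed : clear implicits.

Lemma rusc_subC f S : rusc f -> continuous S -> rusc (fun x => f x - S x).
Proof.
move=> uf cS x a fa; pose e := (a - (f x - S x)) / 2.
have e0 : 0 < e by rewrite /e; lra.
have [V nV VP] := uf x (f x + e) ltac:(lra).
have /cvgrPdist_lt/(_ e e0) nS := cS x.
exists (V `&` [set y | `|S x - S y| < e]); first exact: filterI.
move=> y [/VP fy /= /ltr_normlP[Sy1 Sy2]]; rewrite /e in fy Sy1 Sy2 *; lra.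
Qed.

Lemma rlsc_subC f S : rlsc f -> continuous S -> rlsc (fun x => f x - S x).
Proof.
move=> uf cS x a fa; pose e := ((f x - S x) - a) / 2.
have e0 : 0 < e by rewrite /e; lra.
have [V nV VP] := uf x (f x - e) ltac:(lra).
have /cvgrPdist_lt/(_ e e0) nS := cS x.
exists (V `&` [set y | `|S x - S y| < e]); first exact: filterI.
move=> y [/VP fy /= /ltr_normlP[Sy1 Sy2]]; rewrite /e in fy Sy1 Sy2 *; lra.
Qed.

Lemma kt_step g h (M : R) : normal_space X -> 0 < M -> rusc g -> rlsc h ->
  (forall x, g x <= h x) -> (forall x, g x <= M) -> (forall x, - M <= h x) ->
  exists phi : X -> R, [/\ continuous phi, (forall x, `|phi x| <= M / 3),
    (forall x, g x - phi x <= M * 2 / 3) & (forall x, - (M * 2 / 3) <= h x - phi x)].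
Proof.
move=> nX M0 ug lh gh gM hM.
have cA : closed [set x | h x <= - (M / 3)] := rlsc_closed h _ lh.
have cB : closed [set x | M / 3 <= g x] := rusc_closed g _ ug.
have AB : [set x | h x <= - (M / 3)] `&` [set x | M / 3 <= g x] = set0.
  apply/seteqP; split => // x [/= hx gx]; have := gh x; lra.
have M3 : - (M / 3) < M / 3 by lra.
have [phi [cphi phiA phiB rphi]] := urysohn_ext_itv nX cA cB AB M3.
have rg x : - (M / 3) <= phi x <= M / 3.
  by have := rphi (phi x) (ex_intro2 _ _ x I erefl); rewrite /= in_itv.
exists phi; split => //.
- by move=> x; rewrite ler_norml; exact: rg.
- move=> x; have /andP[r1 r2] := rg x; have [gx|gx] := leP (M / 3) (g x).
    have -> : phi x = M / 3 by apply: phiB; exists x.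
    have := gM x; lra.
  lra.
- move=> x; have /andP[r1 r2] := rg x; have [hx|hx] := leP (h x) (- (M / 3)).
    have -> : phi x = - (M / 3) by apply: phiA; exists x.
    have := hM x; lra.
  lra.
Qed.

Lemma small_geo (e : R) : 0 < e -> exists n, (2 / 3 : R) ^+ n < e.
Proof.
move=> e0.
have h23 : `|(2 / 3 : R)| < 1 by rewrite ger0_norm; lra.
have /cvgr0_norm_lt/(_ e e0) := cvg_geometric (1 : R) h23.
case=> N _ HN; exists N; have := HN N (leqnn N).
by rewrite /geometric /= mul1r ger0_norm // exprn_ge0 //; lra.
Qed.

Arguments small_geo : clear implicits.

Lemma kt_real g h : normal_space X -> rusc g -> rlsc h ->
  (forall x, g x <= h x) -> (forall x, g x <= 1) -> (forall x, - 1 <= h x) ->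
  exists f : X -> R, continuous f /\ forall x, g x <= f x <= h x.
Proof.
move=> nX ug lh gh g1 h1.
pose Mn n : R := (2 / 3) ^+ n.
have Mn0 n : 0 < Mn n by rewrite /Mn exprn_gt0 //; lra.
have MnS n : Mn n.+1 = Mn n * 2 / 3 by rewrite /Mn exprSr mulrA.
have step : forall p : (X -> R) * nat, exists phi : X -> R,
    continuous p.1 -> (forall x, g x - p.1 x <= Mn p.2) ->
    (forall x, - Mn p.2 <= h x - p.1 x) ->
    [/\ continuous phi, (forall x, `|phi x| <= Mn p.2 / 3),
      (forall x, g x - p.1 x - phi x <= Mn p.2.+1) &
      (forall x, - Mn p.2.+1 <= h x - p.1 x - phi x)].
  case=> S n /=.
  have [cS|?] := pselect (continuous S); last by exists S.
  have [gS|?] := pselect (forall x, g x - S x <= Mn n); last by exists S.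
  have [hS|?] := pselect (forall x, - Mn n <= h x - S x); last by exists S.
  have [phi [c1 c2 c3 c4]] := kt_step nX (Mn0 n) (rusc_subC ug cS)
    (rlsc_subC lh cS) (fun x => lerB (gh x) (lexx _)) gS hS.
  by exists phi => _ _ _; split => // x; rewrite MnS; [exact: c3|exact: c4].
have [Phi HPhi] := choice step.
pose S := fix S n := if n is m.+1 then (fun x => S m x + Phi (S m, m) x)
  else (fun _ : X => 0 : R).
have inv n : [/\ continuous (S n), (forall x, g x - S n x <= Mn n) &
    (forall x, - Mn n <= h x - S n x)].
  elim: n => [|n [c1 c2 c3]].
    by split => [x|x|x] /=; [exact: cvg_cst| rewrite subr0 /Mn expr0|
      rewrite subr0 /Mn expr0].
  have [d1 d2 d3 d4] := HPhi (S n, n) c1 c2 c3.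
  split => [x|x|x] /=.
  - exact: (cvgD (c1 x) (d1 x)).
  - by rewrite opprD addrA; exact: d3.
  - by rewrite opprD addrA; exact: d4.
have phib n x : `|Phi (S n, n) x| <= Mn n / 3.
  by have [c1 c2 c3] := inv n; have [d1 d2 d3 d4] := HPhi (S n, n) c1 c2 c3.
pose lo n x := S n x - Mn n.
pose hi n x := S n x + Mn n.
have loS n x : lo n x <= lo n.+1 x.
  rewrite /lo /= MnS; have := phib n x; rewrite ler_norml => /andP[p1 p2]; lra.
have hiS n x : hi n.+1 x <= hi n x.
  rewrite /hi /= MnS; have := phib n x; rewrite ler_norml => /andP[p1 p2]; lra.
have lo_mono n k x : lo n x <= lo (n + k)%N x.
  elim: k => [|k IH]; first by rewrite addn0.
  by rewrite addnS; exact: le_trans IH (loS _ _).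
have hi_mono n k x : hi (n + k)%N x <= hi n x.
  elim: k => [|k IH]; first by rewrite addn0.
  by rewrite addnS; exact: le_trans (hiS _ _) IH.
have lohi n m x : lo n x <= hi m x.
  have lh' k : lo k x <= hi k x by rewrite /lo /hi; have := Mn0 k; lra.
  have [nm|mn] := leqP n m.
    rewrite -(subnKC nm); exact: le_trans (lo_mono _ _ _) (lh' _).
  rewrite -(subnKC (ltnW mn)); exact: le_trans (lh' _) (hi_mono _ _ _).
pose f x := sup (range (fun n => lo n x)).
have fb n x : lo n x <= f x <= hi n x.
  apply/andP; split.
    apply: sup_upper_bound; last by exists n.
    split; first by exists (lo 0%N x), 0%N.
    by exists (hi 0%N x) => _ [m _ <-]; exact: lohi.
  apply: ge_sup; first by exists (lo 0%N x), 0%N.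
  by move=> _ [m _ <-]; exact: lohi.
exists f; split.
- move=> x; apply/cvgrPdist_lt => e e0.
  have [n Hn] : exists n, Mn n < e / 3 by apply: small_geo; lra.
  have [c1 _ _] := inv n.
  have /cvgrPdist_lt/(_ (e / 3) ltac:(lra)) := c1 x.
  apply: filterS => y /ltr_normlP [y1 y2].
  have /andP[a1 a2] := fb n x; have /andP[b1 b2] := fb n y.
  rewrite /lo /hi in a1 a2 b1 b2.
  rewrite ltr_norml; apply/andP; split; lra.
- move=> x; apply/andP; split.
    apply/ler_addgt0Pr => e e0; have [n Hn] : exists n, Mn n < e / 2 by apply: small_geo; lra.
    have [_ c2 _] := inv n; have := c2 x.
    have /andP[a1 a2] := fb n x; rewrite /lo in a1; lra.
  apply/ler_addgt0Pr => e e0; have [n Hn] : exists n, Mn n < e / 2 by apply: small_geo; lra.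
  have [_ _ c3] := inv n; have := c3 x.
  have /andP[a1 a2] := fb n x; rewrite /hi in a2; lra.
Qed.

End kt.


Section ktext.
Context {R : realType} {X : topologicalType}.
Implicit Types (g h : X -> \bar R).

Lemma kt_ext g h : normal_space X -> upper_semicontinuous g ->
  lower_semicontinuous h -> (forall x, (g x <= h x)%E) ->
  exists u : X -> \bar R, continuous u /\ forall x, (g x <= u x <= h x)%E.
Proof.
move=> nX ug lh gh.
pose gr x := contract (g x); pose hr x := contract (h x).
have grb x : -1 <= gr x <= 1 by rewrite -ler_norml contract_le1.
have hrb x : -1 <= hr x <= 1 by rewrite -ler_norml contract_le1.
have ugr : rusc gr.
  move=> x a gxa; have [a1|a1] := ltP 1 a.
    exists setT; first exact: filterT.
    by move=> y _; have /andP[_ ?] := grb y; lra.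
  pose b := (gr x + a) / 2.
  have /andP[b1 b2] := grb x.
  have bn : `|b| < 1 by rewrite ltr_norml /b; apply/andP; split; lra.
  have gb : (g x < (fine (expand b))%:E)%E.
    rewrite fine_expand // lt_expandRL ?inE //; first by rewrite /b -/(gr x); lra.
    exact: ltW.
  have [V nV VP] := ug x _ gb; exists V => // y /VP.
  rewrite fine_expand // lt_expandRL ?inE //; last exact: ltW.
  by rewrite -/(gr y) /b; lra.
have lhr : rlsc hr.
  move=> x a gxa; have [a1|a1] := ltP a (-1).
    exists setT; first exact: filterT.
    by move=> y _; have /andP[? _] := hrb y; lra.
  pose b := (hr x + a) / 2.
  have /andP[b1 b2] := hrb x.
  have bn : `|b| < 1 by rewrite ltr_norml /b; apply/andP; split; lra.
  have gb : ((fine (expand b))%:E < h x)%E.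
    rewrite fine_expand // lt_expandLR ?inE //; first by rewrite /b -/(hr x); lra.
    exact: ltW.
  have [V nV VP] := lh x _ gb; exists V => // y /VP.
  rewrite fine_expand // lt_expandLR ?inE //; last exact: ltW.
  by rewrite -/(hr y) /b; lra.
have grh x : gr x <= hr x by rewrite /gr /hr le_contract.
have gr1 x : gr x <= 1 by have /andP[] := grb x.
have hr1 x : -1 <= hr x by have /andP[] := hrb x.
have [f [cf fb]] := kt_real nX ugr lhr grh gr1 hr1.
have f1 x : f x \in [pred r : R | `|r| <= 1].
  rewrite inE ler_norml; have /andP[? ?] := fb x.
  have /andP[? ?] := grb x; have /andP[? ?] := hrb x; apply/andP; split; lra.
exists (fun x => expand (f x)); split.
  move=> x; apply/cvg_ballP => e e0.
  have /cvgrPdist_lt/(_ e e0) := cf x; apply: filterS => y fy.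
  by rewrite /ball /= /ereal_ball !expandK.
move=> x; have /andP[a b] := fb x.
by rewrite -[g x]contractK -[h x]contractK !le_expand.
Qed.

End ktext.


Section ins.
Context {R : realType} {X : topologicalType}.
Implicit Types (g h : X -> \bar R).
Local Open Scope ereal_scope.

Lemma within_gt g A x (a : \bar R) : {within A, continuous g} -> A x -> a < g x ->
  nbhs x [set y | A y -> a < g y].
Proof.
move=> cg Ax agx; have := (@subspace_continuousP _ A _ g).1 cg x Ax.
move=> /(_ [set e | a < e]); apply.
by apply: open_nbhs_nbhs; split => //; exact: open_ereal_gt_ereal.
Qed.

Lemma within_lt g A x (a : \bar R) : {within A, continuous g} -> A x -> g x < a ->
  nbhs x [set y | A y -> g y < a].
Proof.
move=> cg Ax agx; have := (@subspace_continuousP _ A _ g).1 cg x Ax.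
move=> /(_ [set e | e < a]); apply.
by apply: open_nbhs_nbhs; split => //; exact: open_ereal_lt_ereal.
Qed.

Lemma ins_low g h A : normal_space X -> hahn_pair g h -> closed A ->
  {within A, continuous g} ->
  exists u, continuous u /\ (forall x, g x <= u x <= h x) /\
    (forall x, A x -> u x = g x).
Proof.
move=> nX [gh [ug lh]] cA cg.
pose U x := if `[< A x >] then g x else h x.
have gU x : g x <= U x by rewrite /U; case: ifP.
have Uh x : U x <= h x by rewrite /U; case: ifP.
have lU : lower_semicontinuous U.
  move=> x a; rewrite /U; case: (asboolP (A x)) => Ax aU.
    have [V nV VP] := lh x a (lt_le_trans aU (gh x)).
    exists (V `&` [set y | A y -> a%:E < g y]).
      by apply: filterI => //; exact: within_gt.
    move=> y [/VP ay /= ay']; by case: asboolP => // /ay'.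
  have [V nV VP] := lh x a aU.
  exists (V `&` ~` A).
    apply: filterI => //; apply: open_nbhs_nbhs; split => //.
    exact: closed_openC.
  by move=> y [/VP ay /= nAy]; case: asboolP.
have [u [cu ub]] := kt_ext nX ug lU gU.
exists u; split => //; split.
  by move=> x; have /andP[a b] := ub x; rewrite a (le_trans b).
move=> x Ax; have /andP[a b] := ub x; apply/eqP; rewrite eq_le a andbT.
by move: b; rewrite /U; case: asboolP.
Qed.

Lemma ins_up g h A : normal_space X -> hahn_pair g h -> closed A ->
  {within A, continuous h} ->
  exists u, continuous u /\ (forall x, g x <= u x <= h x) /\
    (forall x, A x -> u x = h x).
Proof.
move=> nX [gh [ug lh]] cA cg.
pose L x := if `[< A x >] then h x else g x.
have gL x : g x <= L x by rewrite /L; case: ifP.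
have Lh x : L x <= h x by rewrite /L; case: ifP.
have uL : upper_semicontinuous L.
  move=> x a; rewrite /L; case: (asboolP (A x)) => Ax aU.
    have [V nV VP] := ug x a (le_lt_trans (gh x) aU).
    exists (V `&` [set y | A y -> h y < a%:E]).
      by apply: filterI => //; exact: within_lt.
    move=> y [/VP ay /= ay']; by case: asboolP => // /ay'.
  have [V nV VP] := ug x a aU.
  exists (V `&` ~` A).
    apply: filterI => //; apply: open_nbhs_nbhs; split => //.
    exact: closed_openC.
  by move=> y [/VP ay /= nAy]; case: asboolP.
have [u [cu ub]] := kt_ext nX uL lh Lh.
exists u; split => //; split.
  by move=> x; have /andP[a b] := ub x; rewrite b (le_trans (gL x) a).
move=> x Ax; have /andP[a b] := ub x; apply/eqP; rewrite eq_le b /=.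
by move: a; rewrite /L; case: asboolP.
Qed.

Lemma sigma_stable g h : normal_space X -> hahn_pair g h ->
  sigma_continuous g -> sigma_continuous h -> stable_hahn_pair g h.
Proof.
move=> nX hp [Xn [cX [covX cgX]]] [Yn [cY [covY chY]]].
have [U HU] := choice (fun n => ins_low nX hp (cX n) (cgX n)).
have [V HV] := choice (fun n => ins_up nX hp (cY n) (chY n)).
exists (fun n => if odd n then V n./2 else U n./2); split.
  by move=> n; case: ifP => _; [have [] := HV n./2|have [] := HU n./2].
move=> x; split; split.
- have : (\bigcup_n Xn n) x by rewrite covX.
  case=> n _ Xx; exists n.*2; rewrite odd_double doubleK.
  by have [_ [_ ->]] := HU n.
- move=> n; case: ifP => _.
    by have [_ [/(_ x)/andP[]]] := HV n./2.
  by have [_ [/(_ x)/andP[]]] := HU n./2.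
- have : (\bigcup_n Yn n) x by rewrite covY.
  case=> n _ Yx; exists n.*2.+1; rewrite /= odd_double /= uphalf_double.
  by have [_ [_ ->]] := HV n.
- move=> n; case: ifP => _.
    by have [_ [/(_ x)/andP[]]] := HV n./2.
  by have [_ [/(_ x)/andP[]]] := HU n./2.
Qed.

End ins.


Section coarse.
Context {R : realType} {X : topologicalType}
  (F : (bool * bool * nat)%type -> X -> \bar R).
Local Notation I := (bool * bool * nat)%type.

Definition JF (x : X) : {ptws I -> \bar R} := fun i => F i x.
Local Notation Xp := (initial_topology JF).

Lemma Xp_normal : normal_space Xp.
Proof. exact: pseudometric_normal. Qed.

Lemma Xp_id : (forall i, continuous (F i)) -> continuous (id : X -> Xp).
Proof.
move=> cF; apply: continuous_comp_initial => x.
by apply/pointwise_cvgP => t; exact: cF.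
Qed.

Lemma Xp_F i : continuous (F i : Xp -> \bar R).
Proof.
have -> : (F i : Xp -> \bar R) =
  (fun f : {ptws I -> \bar R} => f i) \o (JF : Xp -> _) by [].
move=> x; apply: continuous_comp; first exact: initial_continuous.
exact: proj_continuous.
Qed.

Lemma Xp_back (u : Xp -> \bar R) : (forall i, continuous (F i)) ->
  continuous u -> continuous (u : X -> \bar R).
Proof.
move=> cF cu x.
have -> : (u : X -> \bar R) = u \o (id : X -> Xp) by [].
by apply: continuous_comp; [exact: Xp_id|exact: cu].
Qed.

End coarse.
Notation Xp F := (initial_topology (JF F)).

Section main.
Context {R : realType} {X : topologicalType}.

Lemma countable_baire_stable (g h : X -> \bar R) :
  countable_hahn_pair g h -> first_stable_baire g -> first_stable_baire h ->
  stable_hahn_pair g h.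
Proof.
move=> [gn [hn [cgn [chn P]]]] [phi [cphi sphi]] [psi [cpsi spsi]].
pose F (i : bool * bool * nat) : X -> \bar R :=
  match i with
  | (false, false, n) => gn n
  | (false, true, n) => hn n
  | (true, false, n) => phi n
  | (true, true, n) => psi n
  end.
have cF i : continuous (F i).
  by case: i => [[[] []] n]; first [exact: cgn|exact: chn|exact: cphi|exact: cpsi].
have cgn' n : continuous (gn n : Xp F -> \bar R) by exact: (@Xp_F R X F (false, false, n)).
have chn' n : continuous (hn n : Xp F -> \bar R) by exact: (@Xp_F R X F (false, true, n)).
have cphi' n : continuous (phi n : Xp F -> \bar R) by exact: (@Xp_F R X F (true, false, n)).
have cpsi' n : continuous (psi n : Xp F -> \bar R) by exact: (@Xp_F R X F (true, true, n)).
have cp : @countable_hahn_pair (Xp F) R g h by exists gn, hn.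
have bg : @first_stable_baire (Xp F) R g by exists phi.
have bh : @first_stable_baire (Xp F) R h by exists psi.
have [u [cu Pu]] := sigma_stable (@Xp_normal R X F) (countable_hahn cp)
  (baire_sigma bg) (baire_sigma bh).
exists u; split => // n; exact: (Xp_back cF (cu n)).
Qed.

End main.

Theorem proposition2p4 (R : realType) (X : topologicalType)
    (g h : X -> \bar R) :
  (stable_hahn_pair g h <->
     (countable_hahn_pair g h /\ first_stable_baire g /\ first_stable_baire h))
  /\
  (normal_space X ->
     (stable_hahn_pair g h <->
        (hahn_pair g h /\ first_stable_baire g /\ first_stable_baire h)) /\
     (stable_hahn_pair g h <->
        (hahn_pair g h /\ sigma_continuous g /\ sigma_continuous h))).
Proof.
split.
  split.
    move=> s; split; first exact: stable_countable.
    exact: stable_baire.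
  by case=> cp [bg bh]; exact: countable_baire_stable.
move=> nX; split; split.
- move=> s; split; first exact: stable_hahn.
  exact: stable_baire.
- by case=> hp [bg bh]; apply: sigma_stable => //; exact: baire_sigma.
- move=> s; split; first exact: stable_hahn.
  by have [bg bh] := stable_baire s; split; exact: baire_sigma.
- by case=> hp [sg sh]; exact: sigma_stable.
Qed.
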